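(* Consider $n$ bosonic modes with drift matrix $A$ (satisfying $A+A^{\sf T}<0$) and diffusion matrix $D$ (with strictly positive eigenvalues), continuously monitored by a general-dyne measurement. Let $\sigma_c$ be a conditional steady-state covariance matrix obtainable in this setting, i.e. a real symmetric $2n\times 2n$ matrix with $\sigma_c+i\Omega\ge0$ and $A\sigma_c+\sigma_c A^{\sf T}+D\ge 0$. Let $\lambda^{\downarrow}_1\ge\lambda^{\downarrow}_2$ be the two largest eigenvalues of $\sigma_c$, let $\alpha^{\uparrow}_1\le\alpha^{\uparrow}_2\le\dots$ be the (strictly positive) eigenvalues of $-(A+A^{\sf T})$ in increasing order, and let $\delta^{\downarrow}_1\ge\delta^{\downarrow}_2\ge\dots$ be the eigenvalues of $D$ in decreasing order. Then $$\lambda^{\downarrow}_1\lambda^{\downarrow}_2\le\frac{(\delta^{\downarrow}_1+\delta^{\downarrow}_2)^2}{4\,\alpha^{\uparrow}_1\alpha^{\uparrow}_2}.$$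
   Context: Setting: $n$ bosonic modes with canonical operators $\hat{\mathbf R}=(\hat x_1,\hat p_1,\dots,\hat x_n,\hat p_n)^{\sf T}$, $[\hat R_j,\hat R_k]=i\Omega_{jk}$, $\Omega=\bigoplus_{j=1}^n\begin{pmatrix}0&1\\-1&0\end{pmatrix}$. The covariance matrix (CM) of a state $\varrho$ is $\sigma_{jk}=\mathrm{Tr}(\{\hat R_j,\hat R_k\}\varrho)-2\mathrm{Tr}(\hat R_j\varrho)\mathrm{Tr}(\hat R_k\varrho)$. The system evolves by the Lindblad master equation $\dot\varrho=-i[\hat H,\varrho]+\sum_{j=1}^L\mathcal D[\hat c_j]\varrho$, with $\hat H=\frac12\hat{\mathbf R}^{\sf T}H\hat{\mathbf R}$ ($H$ real symmetric), $\hat{\mathbf c}=\widetilde C\hat{\mathbf R}$ ($\widetilde C$ a complex $L\times 2n$ matrix), $\mathcal D[O]\varrho=O\varrho O^\dagger-\frac12(O^\dagger O\varrho+\varrho O^\dagger O)$. The drift matrix is $A=\Omega(H+\mathrm{Im}[\widetilde C^\dagger\widetilde C])$ and the diffusion matrix is $D=2\Omega\,\mathrm{Re}[\widetilde C^\dagger\widetilde C]\Omega^{\sf T}$, so that without monitoring $\dot\sigma=A\sigma+\sigma A^{\sf T}+D$. Under continuous general-dyne monitoring of the environment (any diffusive Gaussian unravelling), the conditional CM $\sigma_c$ evolves deterministically, and a CM $\sigma_c$ is obtainable as a stabilising steady-state conditional CM for some general-dyne unravelling if and only if $\sigma_c+i\Omega\ge0$ and $A\sigma_c+\sigma_cA^{\sf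 T}+D\ge0$. *)

(* Defs.v *)
From HB Require Import structures.
From mathcomp Require Import all_boot all_order all_algebra.
From mathcomp Require Import complex.
Set Implicit Arguments. Unset Strict Implicit. Unset Printing Implicit Defensive.
Import Order.TTheory GRing.Theory Num.Theory.
Local Open Scope ring_scope.

Section Defs.
Variable R : rcfType.

(* Symplectic form Omega = (+)_{j=1}^n [[0,1],[-1,0]] with ordering
   (x_1,p_1,...,x_n,p_n): indices 2k (x_k) and 2k+1 (p_k), 0-based. *)
Definition Omega (n : nat) : 'M[R]_(2 * n) :=
  \matrix_(i, j) (if ~~ odd i && (j == i.+1 :> nat) then 1
                  else if odd i && (j.+1 == i :> nat) then -1 else 0).

Definition ReM m p (M : 'M[R[i]]_(m, p)) : 'M[R]_(m, p) := map_mx (@complex.Re R) M.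
Definition ImM m p (M : 'M[R[i]]_(m, p)) : 'M[R]_(m, p) := map_mx (@complex.Im R) M.
Definition toC m p (M : 'M[R]_(m, p)) : 'M[R[i]]_(m, p) :=
  map_mx (fun x => (x%:C)%C) M.
Definition adjM m p (M : 'M[R[i]]_(m, p)) : 'M[R[i]]_(p, m) :=
  (map_mx (@conjc R) M)^T.

Definition drift n L (H : 'M[R]_(2 * n)) (Ct : 'M[R[i]]_(L, 2 * n)) :
  'M[R]_(2 * n) := Omega n *m (H + ImM (adjM Ct *m Ct)).
Definition diffusion n L (Ct : 'M[R[i]]_(L, 2 * n)) : 'M[R]_(2 * n) :=
  2%:R *: (Omega n *m ReM (adjM Ct *m Ct) *m (Omega n)^T).

Definition sym_mx m (M : 'M[R]_m) : Prop := M^T = M.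
Definition psd_real m (M : 'M[R]_m) : Prop :=
  sym_mx M /\ forall v : 'cV[R]_m, 0 <= (v^T *m M *m v) 0 0.
Definition negdef_real m (M : 'M[R]_m) : Prop :=
  sym_mx M /\ forall v : 'cV[R]_m, v != 0 -> (v^T *m M *m v) 0 0 < 0.
Definition psd_complex m (M : 'M[R[i]]_m) : Prop :=
  forall v : 'cV[R[i]]_m,
    complex.Im ((adjM v *m M *m v) 0 0) = 0 /\ 0 <= complex.Re ((adjM v *m M *m v) 0 0).

(* s is the list of eigenvalues of M, counted with (algebraic) multiplicity:
   the characteristic polynomial splits as prod_{x in s} (X - x). *)
Definition eigenvalues_of m (M : 'M[R]_m) (s : seq R) : Prop :=
  char_poly M = \prod_(x <- s) ('X - x%:P).
Definition eigs_decreasing m (M : 'M[R]_m) (s : seq R) : Prop :=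
  eigenvalues_of M s /\ sorted (fun x y => y <= x) s.
Definition eigs_increasing m (M : 'M[R]_m) (s : seq R) : Prop :=
  eigenvalues_of M s /\ sorted (fun x y => x <= y) s.

End Defs.

(* Main.v *)
Require Import Defs.
From HB Require Import structures.
From mathcomp Require Import all_boot all_order all_algebra ring lra zify.
From mathcomp Require Import complex spectral sesquilinear.
Import Order.TTheory GRing.Theory Num.Theory.
Set Implicit Arguments. Unset Strict Implicit. Unset Printing Implicit Defensive.
Local Open Scope ring_scope.

Lemma char_poly_conj (F : fieldType) n (P A : 'M[F]_n) : P \in unitmx ->
  char_poly (invmx P *m A *m P) = char_poly A.
Proof.
move=> Pu; rewrite /char_poly /char_poly_mx.
have e : 'X%:M - map_mx polyC (invmx P *m A *m P) =
   map_mx polyC (invmx P) *m ('X%:M - map_mx polyC A) *m map_mx polyC P.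
  rewrite mulmxBr mulmxBl !map_mxM -!mulmxA; congr (_ - _).
  rewrite mul_scalar_mx -scalemxAr -map_mxM mulVmx // map_mx1 scalemx1 //.
rewrite e !det_mulmx !det_map_mx det_inv mulrC mulrA -polyCM mulfV ?mul1r //.
by rewrite -unitfE -unitmxE.
Qed.


Lemma sorted_head_le (F : numDomainType) (a0 : F) rest x :
  sorted (fun x y => x <= y) (a0 :: rest) -> x \in a0 :: rest -> a0 <= x.
Proof.
move=> /= hp; rewrite inE => /orP[/eqP->//|xin].
have := order_path_min (@le_trans _ F) hp => /allP; apply; exact: xin.
Qed.

Lemma kyfan1 (F : numDomainType) N (d p : 'I_N -> F) (a : seq F) :
  perm_eq [seq d i | i <- enum 'I_N] a -> sorted (fun x y => x <= y) a ->
  (forall i, 0 <= p i) -> \sum_i p i = 1 ->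
  a`_0 <= \sum_i d i * p i.
Proof.
move=> hperm hs hp hsum.
case: a hperm hs => [|a0 rest] hperm hs.
  have /perm_size := hperm; rewrite size_map size_enum_ord /= => N0.
  by move: hsum; subst N; rewrite big_ord0 => /eqP; rewrite eq_sym oner_eq0.
rewrite /= -[a0](mulr1) -hsum mulr_sumr; apply: ler_sum => i _.
apply: ler_wpM2r => //. apply: (@sorted_head_le F a0 rest (d i) hs).
by rewrite -(perm_mem hperm); apply: map_f; rewrite mem_enum.
Qed.

Lemma kyfan2 (F : numDomainType) N (d p : 'I_N -> F) (a : seq F) :
  perm_eq [seq d i | i <- enum 'I_N] a -> sorted (fun x y => x <= y) a ->
  (1 < size a)%N ->
  (forall i, 0 <= p i) -> (forall i, p i <= 1) -> \sum_i p i = 2%:R ->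
  a`_0 + a`_1 <= \sum_i d i * p i.
Proof.
move=> hperm hs.
case: a hperm hs => [|a0 [|a1 rest]] // hperm hs _ hp hp1 hsum.
have : a0 \in [seq d i | i <- enum 'I_N] by rewrite (perm_mem hperm) mem_head.
move=> /mapP [i0 _ e0].
have hrem : perm_eq [seq d i | i <- enum 'I_N] (d i0 :: [seq d i | i <- rem i0 (enum 'I_N)]).
  by rewrite -map_cons; apply: perm_map; apply: perm_to_rem; rewrite mem_enum.
have hperm2 : perm_eq [seq d i | i <- rem i0 (enum 'I_N)] (a1 :: rest).
  rewrite -(perm_cons a0) {1}e0. by rewrite perm_sym in hrem; apply: (seq.perm_trans hrem hperm).
have hs2 : sorted (fun x y => x <= y) (a1 :: rest) by move: hs => /= /andP[].
have h01 : a0 <= a1 by move: hs => /= /andP[].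
have hj : forall j, j != i0 -> a1 <= d j.
  move=> j hj; apply: (@sorted_head_le F a1 rest (d j) hs2); rewrite -(perm_mem hperm2).
  by apply: map_f; rewrite (mem_rem_uniq _ (enum_uniq _)) inE hj mem_enum.
rewrite (bigD1 i0) //= -e0.
have hs3 : a1 * (2%:R - p i0) <= \sum_(j | j != i0) d j * p j.
  rewrite -hsum (bigD1 i0) //= [p i0 + _]addrC addrK mulr_sumr; apply: ler_sum => j hj'.
  by apply: ler_wpM2r => //; apply: hj.
apply: le_trans (lerD (lexx _) hs3).
have -> : a0 * p i0 + a1 * (2%:R - p i0) = a0 + a1 + (a1 - a0) * (1 - p i0) by ring.
by rewrite /= lerDl; apply: mulr_ge0; rewrite subr_ge0.
Qed.

Section BB.
Local Open Scope sesquilinear_scope.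

Lemma bessel (C : numClosedFieldType) N (w w' : 'rV[C]_N) (i : 'I_N) :
  w *m w^t* = 1%:M -> w' *m w'^t* = 1%:M -> w *m w'^t* = 0 ->
  w 0 i * (w 0 i)^* + w' 0 i * (w' 0 i)^* <= 1.
Proof.
move=> h1 h2 h12.
have h21 : w' *m w^t* = 0.
  have := congr1 (fun X => X^t*) h12; rewrite trmx_mul map_mxM trmxCK.
  by move=> ->; apply/matrixP => a b; rewrite !mxE conjC0.
pose W := col_mx w w'.
have hW : W *m W^t* = 1%:M.
  rewrite /W tr_col_mx map_row_mx mul_col_row h1 h2 h12 h21.
  by rewrite [RHS]scalar_mx_block.
pose Q := W^t* *m W.
have hQQ : Q *m Q = Q by rewrite /Q mulmxA -[W^t* *m W *m W^t*]mulmxA hW mulmx1.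
have hQii : Q i i = w 0 i * (w 0 i)^* + w' 0 i * (w' 0 i)^*.
  rewrite /Q mxE big_split_ord /= !big_ord1 !mxE /W.
  rewrite (unsplitK (inl _ : _ + 'I_1)) (unsplitK (inr _ : 'I_1 + _)) /=.
  by rewrite mulrC [_^* * _]mulrC.
clearbody W.
have hQh : forall k l, Q k l = (Q l k)^*.
  move=> k l; rewrite /Q !mxE rmorph_sum; apply: eq_bigr => j _.
  by rewrite !mxE rmorphM /= conjCK mulrC.
have x0 : 0 <= Q i i by rewrite hQii addr_ge0 // mul_conjC_ge0.
have xr : (Q i i)^* = Q i i by rewrite -hQh.
have hx : Q i i * Q i i <= Q i i.
  rewrite -{3}hQQ [(Q *m Q) i i]mxE (bigD1 i) //= lerDl sumr_ge0 // => k _.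
  by rewrite (hQh k i) mul_conjC_ge0.
rewrite -hQii.
have [->|xn0] := eqVneq (Q i i) 0; first by rewrite ler01.
have xp : 0 < Q i i by rewrite lt_def xn0 x0.
by rewrite -(ler_pM2l xp) mulr1.
Qed.
End BB.

Section Spec.
Variable R : rcfType.
Local Notation C := R[i].
Local Open Scope sesquilinear_scope.

Lemma conjCE (x : C) : Num.conj x = conjc x.
Proof. by case: x. Qed.

Lemma herm_toC N (M : 'M[R]_N) : sym_mx M -> toC M \is hermsymmx.
Proof.
move=> hM; apply/is_hermitianmxP; rewrite expr0 scale1r.
apply/matrixP => i j; rewrite !mxE conjCE conjc_real.
by rewrite -[in RHS]hM mxE.
Qed.

Lemma spec N (M : 'M[R]_N) (a : seq R) : sym_mx M -> eigenvalues_of M a ->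
  exists P : 'M[C]_N, exists d : 'I_N -> C,
   [/\ P \is unitarymx, perm_eq [seq d i | i <- enum 'I_N] (map (fun x => (x%:C)%C) a) &
       toC M = P^t* *m diag_mx (\row_i d i) *m P].
Proof.
move=> hM ha.
have hn := hermitian_normalmx (herm_toC hM).
have := @orthomx_spectralP _ _ (toC M); rewrite hn => /elimT/(_ isT) => e.
set P := spectralmx (toC M) in e; set sp := spectral_diag (toC M) in e.
have Pu : P \is unitarymx by apply: spectral_unitarymx.
exists P, (fun i => sp 0 i); split => //; last first.
  by rewrite {1}e invmx_unitary //; congr (_ *m diag_mx _ *m _); apply/rowP => i; rewrite !mxE.
apply: prod_XsubC_eq.
have := map_char_poly (real_complex R) M.
rewrite ha map_prod_XsubC => h.
rewrite !big_map; transitivity (char_poly (toC M)); last first.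
  by rewrite (_ : toC M = map_mx (real_complex R) M) // -h.
rewrite e char_poly_conj ?unitarymx_unit // char_poly_trig ?diag_mx_is_trig //.
apply: eq_bigr => i _; rewrite mxE eqxx mulr1n //.
Qed.

Definition qf N (M : 'M[C]_N) (u : 'rV[C]_N) := (u *m M *m u^t*) 0 0.

Lemma unit_tr N (P : 'M[C]_N) : P \is unitarymx -> P^t* *m P = 1%:M.
Proof. by move=> Pu; rewrite -invmx_unitary // mulVmx // unitarymx_unit. Qed.

Lemma qf_weights N (M : 'M[R]_N) (a : seq R) (u v : 'rV[C]_N) :
  sym_mx M -> eigenvalues_of M a ->
  u *m u^t* = 1%:M -> v *m v^t* = 1%:M -> u *m v^t* = 0 ->
  exists d : 'I_N -> C, exists pu : 'I_N -> C, exists pv : 'I_N -> C,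
   [/\ perm_eq [seq d i | i <- enum 'I_N] (map (fun x => (x%:C)%C) a),
       qf (toC M) u = \sum_i d i * pu i /\ qf (toC M) v = \sum_i d i * pv i,
       (forall i, 0 <= pu i) /\ (forall i, 0 <= pv i),
       (forall i, pu i + pv i <= 1) &
       \sum_i pu i = 1 /\ \sum_i pv i = 1].
Proof.
move=> hM ha hu hv huv.
have [P [d [Pu hperm hMe]]] := spec hM ha.
have PP := unit_tr Pu.
pose w := u *m P^t*; pose w' := v *m P^t*.
have hw : forall x y : 'rV[C]_N, (x *m P^t*) *m (y *m P^t*)^t* = x *m y^t*.
  by move=> x y; rewrite trmx_mul map_mxM trmxCK mulmxA -[x *m _ *m _]mulmxA PP mulmx1.
have hqf : forall x : 'rV[C]_N, qf (toC M) x =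
    \sum_i d i * ((x *m P^t*) 0 i * ((x *m P^t*) 0 i)^*).
  move=> x; rewrite /qf hMe !mulmxA.
  have -> : x *m P^t* *m diag_mx (\row_i d i) *m P *m x^t* =
     (x *m P^t*) *m diag_mx (\row_i d i) *m (x *m P^t*)^t*.
    by rewrite -mulmxA; congr (_ *m _); rewrite trmx_mul map_mxM trmxCK.
  rewrite mxE; apply: eq_bigr => i _.
  by rewrite mul_mx_diag !mxE; ring.
have hs : forall x : 'rV[C]_N, x *m x^t* = 1%:M ->
    \sum_i (x *m P^t*) 0 i * ((x *m P^t*) 0 i)^* = 1.
  move=> x hx; have e := congr1 (fun X : 'M[C]_1 => X 0 0) (hw x x).
  rewrite /= hx [in RHS]mxE mulr1n in e.
  by rewrite -e [in RHS]mxE; apply: eq_bigr => i _; rewrite !mxE.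
exists d, (fun i => w 0 i * (w 0 i)^*), (fun i => w' 0 i * (w' 0 i)^*); split => //.
- by split => i; apply: mul_conjC_ge0.
- by move=> i; apply: bessel; rewrite /w /w' !hw.
- by split; apply: hs.
Qed.

Lemma size_eig N (M : 'M[R]_N) s : eigenvalues_of M s -> size s = N.
Proof.
rewrite /eigenvalues_of => h; have := size_char_poly M; rewrite h size_prod_XsubC.
by case.
Qed.

Lemma real_eigvec N (M : 'M[R]_N) s x : eigenvalues_of M s -> x \in s ->
  exists2 v : 'rV[R]_N, v *m M = x *: v & v != 0.
Proof.
move=> h hx; apply/eigenvalueP; rewrite eigenvalue_root_char.
by rewrite /eigenvalues_of in h; rewrite h root_prod_XsubC.
Qed.

Lemma sq_pos N (v : 'rV[R]_N) : v != 0 -> 0 < (v *m v^T) 0 0.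
Proof.
move=> hv; rewrite mxE lt_def sumr_ge0 ?andbT; last first.
  by move=> i _; rewrite mxE -expr2 sqr_ge0.
apply/negP => /eqP h; move/negP: hv; apply; apply/eqP/rowP => j.
have nn : forall i : 'I_N, true -> 0 <= v 0 i * v^T i 0.
  by move=> i _; rewrite mxE -expr2 sqr_ge0.
have H := psumr_eq0P nn h.
by have := H j isT; rewrite mxE -expr2 => /eqP; rewrite sqrf_eq0 => /eqP ->; rewrite mxE.
Qed.

Lemma two_idx (F : eqType) N (d : 'I_N -> F) a0 a1 rest :
  perm_eq [seq d i | i <- enum 'I_N] [:: a0, a1 & rest] ->
  exists i0, exists i1, [/\ i0 != i1, d i0 = a0 & d i1 = a1].
Proof.
move=> hperm.
have : a0 \in [seq d i | i <- enum 'I_N] by rewrite (perm_mem hperm) mem_head.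
move=> /mapP [i0 _ e0].
have hrem : perm_eq [seq d i | i <- enum 'I_N] (d i0 :: [seq d i | i <- rem i0 (enum 'I_N)]).
  by rewrite -map_cons; apply: perm_map; apply: perm_to_rem; rewrite mem_enum.
have hperm2 : perm_eq [seq d i | i <- rem i0 (enum 'I_N)] (a1 :: rest).
  rewrite -(perm_cons a0) {1}e0.
  by rewrite perm_sym in hrem; apply: (seq.perm_trans hrem hperm).
have : a1 \in [seq d i | i <- rem i0 (enum 'I_N)] by rewrite (perm_mem hperm2) mem_head.
move=> /mapP [i1 hi1 e1]; exists i0, i1; split => //.
by move: hi1; rewrite (mem_rem_uniq _ (enum_uniq _)) inE eq_sym => /andP[].
Qed.

Lemma unit_rows N (P : 'M[C]_N) i j : P \is unitarymx ->
  row i P *m (row j P)^t* = (i == j)%:R%:M.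
Proof.
move=> /unitarymxP PP; apply/matrixP => a b.
rewrite !ord1; have := congr1 (fun X : 'M[C]_N => X i j) PP.
move=> /= e; rewrite [RHS]mxE eqxx mulr1n.
have e2 : (1%:M : 'M[C]_N) i j = (i == j)%:R by rewrite mxE.
rewrite -e2 -e !mxE; apply: eq_bigr => k _; rewrite !mxE //.
Qed.

Lemma row_eig N (P : 'M[C]_N) (d : 'I_N -> C) (S : 'M[C]_N) i :
  P \is unitarymx -> S = P^t* *m diag_mx (\row_i d i) *m P ->
  row i P *m S = d i *: row i P.
Proof.
move=> /unitarymxP PP ->; rewrite -row_mul !mulmxA PP mul1mx row_mul row_diag_mx.
by rewrite mxE -scalemxAl -rowE.
Qed.

Lemma Re_qf_real N (M : 'M[R]_N) (u : 'rV[C]_N) :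
  complex.Re (qf (toC M) u) = (map_mx (@complex.Re R) u *m M *m (map_mx (@complex.Re R) u)^T) 0 0
                    + (map_mx (@complex.Im R) u *m M *m (map_mx (@complex.Im R) u)^T) 0 0.
Proof.
rewrite /qf !mxE raddf_sum -big_split; apply: eq_bigr => k _ /=.
rewrite !mxE mulr_suml raddf_sum !mulr_suml -big_split; apply: eq_bigr => j _ /=.
rewrite !mxE conjCE.
case: (u 0 j) => a b; case: (u 0 k) => c e /=; ring.
Qed.

Lemma psd_qf N (M : 'M[R]_N) (u : 'rV[C]_N) : psd_real M -> 0 <= complex.Re (qf (toC M) u).
Proof.
move=> [_ h]; rewrite Re_qf_real addr_ge0 //.
  by have := h (map_mx (@complex.Re R) u)^T; rewrite trmxK.
by have := h (map_mx (@complex.Im R) u)^T; rewrite trmxK.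
Qed.

Lemma psdc_real N (Z : 'M[R]_N) (W : 'M[R]_N) (x : 'rV[R]_N) :
  psd_complex (toC Z + (Complex 0 1)%C *: toC W) -> 0 <= (x *m Z *m x^T) 0 0.
Proof.
move=> h; have [_ h2] := h (toC x^T).
suff <- : complex.Re ((adjM (toC x^T) *m (toC Z + (Complex 0 1)%C *: toC W) *m toC x^T) 0 0) = 
   (x *m Z *m x^T) 0 0 by [].
rewrite !mxE raddf_sum; apply: eq_bigr => k _ /=.
rewrite !mxE mulr_suml raddf_sum !mulr_suml; apply: eq_bigr => j _ /=.
rewrite !mxE /=; ring.
Qed.

Lemma entD (X Y : 'M[C]_1) : (X + Y) 0 0 = X 0 0 + Y 0 0. Proof. by rewrite mxE. Qed.
Lemma entZ c (X : 'M[C]_1) : (c *: X) 0 0 = c * X 0 0. Proof. by rewrite mxE. Qed.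
Lemma entN (X : 'M[C]_1) : (- X) 0 0 = - X 0 0. Proof. by rewrite mxE. Qed.

Lemma qf_lyap N (A S B D : 'M[C]_N) (u : 'rV_N) c :
  u *m S = c *: u -> S *m u^t* = c *: u^t* ->
  qf (A *m S + S *m B + D) u = c * qf (A + B) u + qf D u.
Proof.
move=> h1 h2; rewrite /qf.
have e1 : u *m (A *m S) *m u^t* = c *: (u *m A *m u^t*).
  by rewrite mulmxA -(mulmxA (u *m A)) h2 scalemxAr.
have e2 : u *m (S *m B) *m u^t* = c *: (u *m B *m u^t*).
  by rewrite mulmxA h1 -!scalemxAl.
rewrite !mulmxDr !mulmxDl e1 e2 -scalerDr.
by rewrite !entD !entZ entD mulrDr.
Qed.

Lemma qfN N (A : 'M[C]_N) u : qf (- A) u = - qf A u.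
Proof. by rewrite /qf mulmxN mulNmx entN. Qed.

Lemma qfD N (A B : 'M[C]_N) u : qf (A + B) u = qf A u + qf B u.
Proof. by rewrite /qf mulmxDr mulmxDl entD. Qed.

Lemma lecRe (x : R) (z : C) : (x%:C)%C <= z -> x <= complex.Re z.
Proof. by rewrite lecE => /andP[_]. Qed.

Lemma lecRe2 (x : R) (z : C) : z <= (x%:C)%C -> complex.Re z <= x.
Proof. by rewrite lecE => /andP[_]. Qed.

Lemma kf_min N (M : 'M[R]_N) a (u v : 'rV[C]_N) : sym_mx M -> eigs_increasing M a ->
  (1 < size a)%N ->
  u *m u^t* = 1%:M -> v *m v^t* = 1%:M -> u *m v^t* = 0 ->
  [/\ a`_0 <= complex.Re (qf (toC M) u), a`_0 <= complex.Re (qf (toC M) v) &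
      a`_0 + a`_1 <= complex.Re (qf (toC M) u) + complex.Re (qf (toC M) v)].
Proof.
move=> hM [ha hs] hsz hu hv huv.
have [d [pu [pv [hperm [qu qv] [pu0 pv0] p1 [su sv]]]]] := qf_weights hM ha hu hv huv.
have hsC : sorted (fun x y => x <= y) (map (fun x => (x%:C)%C) a).
  by rewrite sorted_map; apply: sub_sorted hs => x y; rewrite /relpre /= lecR.
have e0 : (map (fun x => (x%:C)%C) a)`_0 = ((a`_0)%:C)%C.
  by rewrite (nth_map 0) //; apply: ltn_trans hsz.
have e1 : (map (fun x => (x%:C)%C) a)`_1 = ((a`_1)%:C)%C by rewrite (nth_map 0).
split.
- by apply: lecRe; rewrite qu -e0; apply: kyfan1.
- by apply: lecRe; rewrite qv -e0; apply: kyfan1.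
- rewrite -raddfD /=; apply: lecRe; rewrite rmorphD /= -e0 -e1 qu qv -big_split /=.
  under eq_bigr do rewrite -mulrDr.
  apply: kyfan2 => //; first by rewrite size_map.
  + by move=> i; rewrite addr_ge0.
  + by rewrite big_split /= su sv.
Qed.

Lemma kf_max N (M : 'M[R]_N) a (u v : 'rV[C]_N) : sym_mx M -> eigs_decreasing M a ->
  (1 < size a)%N ->
  u *m u^t* = 1%:M -> v *m v^t* = 1%:M -> u *m v^t* = 0 ->
  complex.Re (qf (toC M) u) + complex.Re (qf (toC M) v) <= a`_0 + a`_1.
Proof.
move=> hM [ha hs] hsz hu hv huv.
have [d [pu [pv [hperm [qu qv] [pu0 pv0] p1 [su sv]]]]] := qf_weights hM ha hu hv huv.
pose f := fun x : R => (- x%:C)%C.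
have hsC : sorted (fun x y => x <= y) (map f a).
  by rewrite sorted_map; apply: sub_sorted hs => x y; rewrite /relpre /f /= lerN2 lecR.
have e0 : (map f a)`_0 = - ((a`_0)%:C)%C.
  by rewrite (nth_map 0) //; apply: ltn_trans hsz.
have e1 : (map f a)`_1 = - ((a`_1)%:C)%C by rewrite (nth_map 0).
have hperm' : perm_eq [seq (- d i) | i <- enum 'I_N] (map f a).
  by rewrite (map_comp (fun x => - x) d) /f (map_comp (fun x => - x) (fun x => (x%:C)%C)); apply: perm_map.
have := kyfan2 (p := fun i => pu i + pv i) hperm' hsC.
rewrite size_map => /(_ hsz (fun i => addr_ge0 (pu0 i) (pv0 i)) p1).
rewrite big_split /= su sv => /(_ erefl).
rewrite e0 e1 -opprD lerNl.
under eq_bigr do rewrite mulNr mulrDr.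
rewrite sumrN opprK big_split /= -qu -qv -rmorphD => h.
by rewrite -raddfD; apply: lecRe2.
Qed.

Lemma toCE m p (M : 'M[R]_(m, p)) : toC M = map_mx (real_complex R) M.
Proof. by []. Qed.

Lemma ReM_real (x : R) (z : C) : complex.Re ((x%:C)%C * z) = x * complex.Re z.
Proof. by case: z => a b /=; ring. Qed.
End Spec.

Theorem lemma3 (R : rcfType) (n L : nat) (Hn : (0 < n)%N)
  (H : 'M[R]_(2 * n)) (Ct : 'M[R[i]]_(L, 2 * n)) (sigma : 'M[R]_(2 * n))
  (lam alpha delta : seq R) :
  let A := drift H Ct in
  let D := diffusion Ct in
  sym_mx H ->
  negdef_real (A + A^T) ->
  eigs_decreasing D delta ->
  all (fun d => 0 < d) delta ->
  sym_mx sigma ->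
  psd_complex (toC sigma + (Complex 0 1)%C *: toC (Omega R n)) ->
  psd_real (A *m sigma + sigma *m A^T + D) ->
  eigs_decreasing sigma lam ->
  eigs_increasing (- (A + A^T)) alpha ->
  lam`_0 * lam`_1 <=
    (delta`_0 + delta`_1) ^+ 2 / (4%:R * alpha`_0 * alpha`_1).
Proof.
move=> A D hH [hAs hneg] hDe hDpos hsig hpsdc hN hle hae.
clearbody A D.
Local Open Scope sesquilinear_scope.
have Hsz : (1 < 2 * n)%N by lia.
have sl := size_eig hle.1; have sa := size_eig hae.1; have sd := size_eig hDe.1.
have hMa : sym_mx (- (A + A^T)) by rewrite /sym_mx linearN /= hAs.
have hDsym : sym_mx D.
  have := hN.1; rewrite /sym_mx !linearD /= !trmx_mul trmxK hsig => e.
  apply: (addrI (A *m sigma + sigma *m A^T)); rewrite -e.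
  by rewrite [A *m sigma + _]addrC.
case: lam hle sl => [|l0 [|l1 lr]] hle sl; try by rewrite -sl in Hsz.
case: alpha hae sa => [|a0 [|a1 ar]] hae sa; try by rewrite -sa in Hsz.
case: delta hDe sd hDpos => [|d0 [|d1 dr]] hDe sd hDpos; try by rewrite -sd in Hsz.
rewrite /=.
have [P [s [Pu hperm hse]]] := spec hsig hle.1.
rewrite /= in hperm.
have [i0 [i1 [hi01 e0 e1]]] := two_idx hperm.
pose u := row i0 P; pose v := row i1 P.
have hu : u *m u^t* = 1%:M by rewrite unit_rows // eqxx.
have hv : v *m v^t* = 1%:M by rewrite unit_rows // eqxx.
have huv : u *m v^t* = 0 by rewrite unit_rows // (negbTE hi01) raddf0.
have hS : (toC sigma)^t* = toC sigma.
  by have /is_hermitianmxP := herm_toC hsig; rewrite expr0 scale1r => <-.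
have eig : forall (w : 'rV_(2 * n)) (c : R), w *m toC sigma = (c%:C)%C *: w ->
    toC sigma *m w^t* = (c%:C)%C *: w^t*.
  move=> w c hw; have := congr1 (fun X => X^t*) hw; rewrite /= trmx_mul map_mxM hS => ->.
  by rewrite linearZ /= map_mxZ /= conjCE conjc_real.
have hSu : u *m toC sigma = (l0%:C)%C *: u by rewrite (row_eig i0 Pu hse) e0.
have hSv : v *m toC sigma = (l1%:C)%C *: v by rewrite (row_eig i1 Pu hse) e1.
have eN : toC (A *m sigma + sigma *m A^T + D) =
    toC A *m toC sigma + toC sigma *m toC A^T + toC D.
  by rewrite !toCE !map_mxD !map_mxM.
have eMa : toC A + toC A^T = - toC (- (A + A^T)).
  by rewrite !toCE map_mxN map_mxD opprK.
have F : forall (w : 'rV_(2 * n)) (c : R), w *m toC sigma = (c%:C)%C *: w ->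
   0 <= c * - complex.Re (qf (toC (- (A + A^T))) w) + complex.Re (qf (toC D) w).
  move=> w c hw; have := psd_qf w hN.
  rewrite eN; erewrite qf_lyap; [|exact: hw|exact: eig w c hw].
  by rewrite eMa qfN raddfD /= ReM_real raddfN.
have Fu := F u l0 hSu; have Fv := F v l1 hSv.
have [ka kb kab] := kf_min hMa hae (ltac:(by rewrite sa)) hu hv huv.
have kd := kf_max hDsym hDe (ltac:(by rewrite sd)) hu hv huv.
have l1pos : 0 <= l1.
  have hin : l1 \in [:: l0, l1 & lr] by rewrite in_cons mem_head orbT.
  have [x hx xn0] := real_eigvec hle.1 hin.
  have := psdc_real x hpsdc; rewrite hx -scalemxAl mxE pmulr_lge0 //.
  exact: sq_pos.
have a0pos : 0 < a0.
  have hin : a0 \in [:: a0, a1 & ar] by rewrite mem_head.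
  have [x hx xn0] := real_eigvec hae.1 hin.
  have := hneg x^T (ltac:(by rewrite trmx_eq0)); rewrite trmxK.
  have -> : x *m (A + A^T) = - (a0 *: x) by rewrite -hx mulmxN opprK.
  by rewrite mulNmx -scalemxAl mxE mxE oppr_lt0 pmulr_lgt0 // sq_pos.
have l10 : l1 <= l0 by move: hle.2 => /= /andP[].
have a01 : a0 <= a1 by move: hae.2 => /= /andP[].
move: ka kb kab kd Fu Fv.
set au := complex.Re (qf _ u); set av := complex.Re (qf _ v).
set du := complex.Re (qf _ u); set dv := complex.Re (qf _ v).
move=> ka kb kab kd Fu Fv; rewrite /= in ka kb kab kd.
have h1 : a0 * a1 <= au * av by nra.
have hS0 : 0 <= l0 * au + l1 * av by nra.
have hS1 : l0 * au + l1 * av <= d0 + d1 by nra.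
have h3a : 4%:R * (l0 * au) * (l1 * av) <= (l0 * au + l1 * av) ^+ 2.
  have := sqr_ge0 (l0 * au - l1 * av); rewrite -subr_ge0 => h.
  by rewrite -subr_ge0; apply: le_trans h _; rewrite le_eqVlt; apply/orP; left; apply/eqP; ring.
have h3b : (l0 * au + l1 * av) ^+ 2 <= (d0 + d1) ^+ 2.
  have := mulr_ge0 (ltac:(by rewrite subr_ge0) : 0 <= d0 + d1 - (l0 * au + l1 * av)) (addr_ge0 hS0 (le_trans hS0 hS1)).
  move=> h; rewrite -subr_ge0; apply: le_trans h _; rewrite le_eqVlt; apply/orP; left; apply/eqP; ring.
have h3 := le_trans h3a h3b.
have ll : 0 <= l0 * l1 by nra.
have h4 : l0 * l1 * (4%:R * a0 * a1) <= 4%:R * (l0 * au) * (l1 * av).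
  have -> : 4%:R * (l0 * au) * (l1 * av) = l0 * l1 * (4%:R * (au * av)) by ring.
  apply: ler_wpM2l => //; rewrite -mulrA; apply: ler_wpM2l => //; exact: ler0n.
rewrite ler_pdivlMr; first exact: le_trans h4 h3.
have a1pos : 0 < a1 by lra.
by rewrite mulr_gt0 // mulr_gt0 // ltr0n.
Qed.
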